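(* Let $K=\mathrm{SU}(2)$ and $\mathcal{M}=\{(g_1,h_1,g_2,h_2)\in K^4:[g_1,h_1][g_2,h_2]=I\}/K$. There is a one-to-one correspondence between the subsets $$\{(g,h,h,g)\in K^4 : [g,h]\neq\pm I\}/K$$ and $$\{(g,h,khk^{-1},kgk^{-1})\in K^4 : [g,h]=k^{-1}[g,h]k,\ [g,h]\neq\pm I,\ k^2=-I\}/K$$ of $\mathcal{M}$.
   Context: $[a,b]=aba^{-1}b^{-1}$; $K$ acts on quadruples by simultaneous conjugation and $\mathcal{M}$ is the quotient. Both displayed sets consist of quadruples satisfying $[g_1,h_1][g_2,h_2]=I$, and their images in $\mathcal{M}$ are meant. *)

(* Defs.v *)
From HB Require Import structures.
From mathcomp Require Import all_boot all_order all_algebra.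
From mathcomp Require Import complex.
From mathcomp Require Import boolp classical_sets functions reals.
Set Implicit Arguments. Unset Strict Implicit. Unset Printing Implicit Defensive.
Import Order.TTheory GRing.Theory Num.Theory.
Local Open Scope ring_scope.
Local Open Scope classical_set_scope.

Section SU2.
Variable R : realType.
Notation C := (R[i])%C.
Notation mat := 'M[C]_2.

Definition adjmx (A : mat) : mat := (map_mx Num.conj A)^T.

Definition SU2 : set mat := [set A | A *m adjmx A = 1%:M /\ \det A = 1].

Definition comm (a b : mat) : mat := a *m b *m invmx a *m invmx b.

Definition quad := (mat * mat * mat * mat)%type.

Definition conj_quad (k : mat) (q : quad) : quad :=
  let: (g1, h1, g2, h2) := q in
  (k *m g1 *m invmx k, k *m h1 *m invmx k,
   k *m g2 *m invmx k, k *m h2 *m invmx k).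

Definition Rep : set quad :=
  [set q | let: (g1, h1, g2, h2) := q in
     [/\ SU2 g1, SU2 h1, SU2 g2, SU2 h2 & comm g1 h1 *m comm g2 h2 = 1%:M]].

Definition orbitK (q : quad) : set quad :=
  [set q' | exists2 k, SU2 k & q' = conj_quad k q].

Definition Mquot : set (set quad) := orbitK @` Rep.

Definition imM (S : set quad) : set (set quad) := orbitK @` S.

Definition S1 : set quad :=
  [set q | exists g h, [/\ SU2 g, SU2 h, q = (g, h, h, g),
        comm g h != 1%:M & comm g h != - 1%:M]].

Definition S2 : set quad :=
  [set q | exists g h k, [/\ SU2 g, SU2 h, SU2 k,
        q = (g, h, k *m h *m invmx k, k *m g *m invmx k) &
        [/\ comm g h = invmx k *m comm g h *m k,
            comm g h != 1%:M, comm g h != - 1%:M &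
            k *m k = - 1%:M]]].

End SU2.

(* Main.v *)
Require Import Defs.
From HB Require Import structures.
From mathcomp Require Import all_boot all_order all_algebra.
From mathcomp Require Import complex.
From mathcomp Require Import boolp classical_sets functions reals.
From mathcomp Require Import ring.
Set Implicit Arguments. Unset Strict Implicit. Unset Printing Implicit Defensive.
Import Order.TTheory GRing.Theory Num.Theory.
Local Open Scope ring_scope.

Lemma mx2_eq (F : Type) (A B : 'M[F]_2) :
  A 0 0 = B 0 0 -> A 0 1 = B 0 1 -> A 1 0 = B 1 0 -> A 1 1 = B 1 1 -> A = B.
Proof.
move=> h00 h01 h10 h11; apply/matrixP => i j.
have Ei : i = 0 \/ i = 1 by case: i => -[|[|//]] Hi; [left|right]; apply/val_inj.
have Ej : j = 0 \/ j = 1 by case: j => -[|[|//]] Hj; [left|right]; apply/val_inj.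
by case: Ei => ->; case: Ej => ->.
Qed.

Lemma mulmx2E (F : pzRingType) (A B : 'M[F]_2) i j :
  (A *m B) i j = A i 0 * B 0 j + A i 1 * B 1 j.
Proof.
rewrite mxE !big_ord_recl big_ord0 addr0.
by have -> : lift ord0 ord0 = 1 :> 'I_2 by apply/val_inj.
Qed.

Definition mx2 (F : Type) (a b c d : F) : 'M[F]_2 :=
  \matrix_(i < 2, j < 2) if (i : nat) == 0%N then (if (j : nat) == 0%N then a else b)
                          else (if (j : nat) == 0%N then c else d).

Lemma mx2E (F : Type) (A : 'M[F]_2) : A = mx2 (A 0 0) (A 0 1) (A 1 0) (A 1 1).
Proof. by apply: mx2_eq; rewrite mxE. Qed.

Lemma mx2_00 (F : Type) (a b c d : F) : mx2 a b c d 0 0 = a. Proof. by rewrite mxE. Qed.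
Lemma mx2_01 (F : Type) (a b c d : F) : mx2 a b c d 0 1 = b. Proof. by rewrite mxE. Qed.
Lemma mx2_10 (F : Type) (a b c d : F) : mx2 a b c d 1 0 = c. Proof. by rewrite mxE. Qed.
Lemma mx2_11 (F : Type) (a b c d : F) : mx2 a b c d 1 1 = d. Proof. by rewrite mxE. Qed.

Lemma det_mx2 (F : comPzRingType) (a b c d : F) : \det (mx2 a b c d) = a * d - b * c.
Proof.
rewrite (expand_det_row _ 0) !big_ord_recl big_ord0 addr0 /cofactor !det_mx11.
by rewrite !mxE /= /bump /= !add0n expr0 expr1 !mul1r mulN1r mulrN.
Qed.

Lemma det2E (F : comPzRingType) (A : 'M[F]_2) :
  \det A = A 0 0 * A 1 1 - A 0 1 * A 1 0.
Proof. by rewrite {1}(mx2E A) det_mx2. Qed.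

Local Notation CC R := (R[i])%C.

Lemma mul_mx2 (F : pzRingType) (a b c d a' b' c' d' : F) :
  mx2 a b c d *m mx2 a' b' c' d' =
  mx2 (a * a' + b * c') (a * b' + b * d') (c * a' + d * c') (c * b' + d * d').
Proof. by apply: mx2_eq; rewrite mulmx2E !mxE. Qed.

Lemma mx2_inj (F : Type) (a b c d a' b' c' d' : F) :
  mx2 a b c d = mx2 a' b' c' d' -> [/\ a = a', b = b', c = c' & d = d'].
Proof.
move=> E; split.
- by rewrite -(mx2_00 a b c d) E mx2_00.
- by rewrite -(mx2_01 a b c d) E mx2_01.
- by rewrite -(mx2_10 a b c d) E mx2_10.
- by rewrite -(mx2_11 a b c d) E mx2_11.
Qed.

Lemma scalar_mx2 (F : pzRingType) (k : F) : k%:M = mx2 k 0 0 k :> 'M_2.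
Proof. by apply: mx2_eq; rewrite !mxE. Qed.

Lemma opp_mx2 (F : pzRingType) (a b c d : F) : - mx2 a b c d = mx2 (-a) (-b) (-c) (-d).
Proof. by apply: mx2_eq; rewrite !mxE. Qed.

Lemma adj_mx2 (R : realType) (a b c d : CC R) :
  adjmx (mx2 a b c d) = mx2 a^* c^* b^* d^*.
Proof. by apply: mx2_eq; rewrite !mxE. Qed.

Lemma SU2_form (R : realType) (A : 'M[CC R]_2) : SU2 A ->
  exists a b, A = mx2 a b (- b^*) a^* /\ a * a^* + b * b^* = 1.
Proof.
case=> H1 H2; rewrite (mx2E A) in H1 H2 *.
move: (A 0 0) (A 0 1) (A 1 0) (A 1 1) H1 H2 => a b c d.
rewrite adj_mx2 mul_mx2 (scalar_mx2 (1 : CC R)) det_mx2 => H1 Ed.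
case: (mx2_inj H1) => E00 E01 E10 E11.
exists a, b.
have Ed' : a * d - b * c - 1 = 0 by rewrite Ed subrr.
have E00' : a * a^* + b * b^* - 1 = 0 by rewrite E00 subrr.
have Hd : a^* - d = d * (a * a^* + b * b^* - 1) - a^* * (a * d - b * c - 1) - b * (c * a^* + d * b^*) by ring.
have Hc : - c - b^* = c * (a * a^* + b * b^* - 1) - a * (c * a^* + d * b^*) + b^* * (a * d - b * c - 1) by ring.
rewrite E00' Ed' E10 !mulr0 !subr0 addr0 in Hd Hc.
have Ec : c = - b^* by rewrite -(subr0_eq Hc) opprK.
by rewrite Ec -(subr0_eq Hd); split.
Qed.

Lemma conjN (C : numClosedFieldType) (x : C) : (- x)^* = - x^*.
Proof. exact: rmorphN. Qed.
Lemma conjM (C : numClosedFieldType) (x y : C) : (x * y)^* = x^* * y^*.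
Proof. exact: rmorphM. Qed.
Lemma conjD (C : numClosedFieldType) (x y : C) : (x + y)^* = x^* + y^*.
Proof. exact: rmorphD. Qed.
Lemma conjB (C : numClosedFieldType) (x y : C) : (x - y)^* = x^* - y^*.
Proof. exact: rmorphB. Qed.
Lemma conjV (C : numClosedFieldType) (x : C) : (x^-1)^* = (x^*)^-1.
Proof. exact: fmorphV. Qed.
Lemma conj1 (C : numClosedFieldType) : (1 : C)^* = 1.
Proof. exact: rmorph1. Qed.
Lemma conj0 (C : numClosedFieldType) : (0 : C)^* = 0.
Proof. exact: rmorph0. Qed.

Lemma SU2_mk (R : realType) (a b : CC R) : a * a^* + b * b^* = 1 ->
  SU2 (mx2 a b (- b^*) a^*).
Proof.
move=> E; split.
  rewrite adj_mx2 mul_mx2 (scalar_mx2 (1 : CC R)) conjN !conjCK; congr mx2.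
  - exact E.
  - ring.
  - ring.
  - by rewrite -E; ring.
by rewrite det_mx2 -E; ring.
Qed.

Definition cjr (T : unitRingType) (k x : T) := k * x / k.
Definition commr (T : unitRingType) (g h : T) := g * h / g / h.

Lemma unitM (T : unitRingType) (x y : T) : x \is a GRing.unit -> y \is a GRing.unit ->
  x * y \is a GRing.unit.
Proof. by move=> ux uy; rewrite unitrMl. Qed.

Lemma cjrM (T : unitRingType) (k x y : T) : k \is a GRing.unit ->
  cjr k (x * y) = cjr k x * cjr k y.
Proof. by move=> uk; rewrite /cjr !mulrA divrK. Qed.

Lemma cjrV (T : unitRingType) (k x : T) : k \is a GRing.unit -> x \is a GRing.unit ->
  (cjr k x)^-1 = cjr k x^-1.
Proof.
move=> uk ux; rewrite /cjr !invrM ?unitrV ?unitM ?invrK ?uk ?ux ?mulrA //.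
Qed.

Lemma cjr_unit (T : unitRingType) (k x : T) : k \is a GRing.unit -> x \is a GRing.unit ->
  cjr k x \is a GRing.unit.
Proof. by move=> uk ux; rewrite /cjr !unitM ?unitrV. Qed.

Lemma commr_cj (T : unitRingType) (k g h : T) : k \is a GRing.unit ->
  g \is a GRing.unit -> h \is a GRing.unit ->
  commr (cjr k g) (cjr k h) = cjr k (commr g h).
Proof.
move=> uk ug uh; rewrite /commr !cjrM ?cjrV //.
Qed.

Lemma cjr_comp (T : unitRingType) (k m x : T) : k \is a GRing.unit -> m \is a GRing.unit ->
  cjr k (cjr m x) = cjr (k * m) x.
Proof. by move=> uk um; rewrite /cjr invrM // !mulrA. Qed.

Lemma cjr1x (T : unitRingType) (x : T) : cjr 1 x = x.
Proof. by rewrite /cjr invr1 mul1r mulr1. Qed.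

Lemma cjrK (T : unitRingType) (k x : T) : k \is a GRing.unit -> cjr k^-1 (cjr k x) = x.
Proof. by move=> uk; rewrite /cjr invrK !mulrA mulVr // mul1r divrK. Qed.

Lemma cjr_inj (T : unitRingType) (k x y : T) : k \is a GRing.unit -> cjr k x = cjr k y -> x = y.
Proof. by move=> uk E; rewrite -(cjrK x uk) E cjrK. Qed.

Lemma cjr_1 (T : unitRingType) (k : T) : k \is a GRing.unit -> cjr k 1 = 1.
Proof. by move=> uk; rewrite /cjr mulr1 divrr. Qed.

Lemma cjr_N1 (T : unitRingType) (k : T) : k \is a GRing.unit -> cjr k (-1) = -1.
Proof. by move=> uk; rewrite /cjr mulrN1 mulNr divrr. Qed.

Lemma commr_inv (T : unitRingType) (g h : T) : g \is a GRing.unit -> h \is a GRing.unit ->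
  commr g h * commr h g = 1.
Proof.
move=> ug uh; rewrite /commr !mulrA divrK // divrK // mulrK // divrr //.
Qed.

Lemma commr_unit (T : unitRingType) (g h : T) : g \is a GRing.unit -> h \is a GRing.unit ->
  commr g h \is a GRing.unit.
Proof. by move=> ug uh; rewrite /commr !unitM ?unitrV. Qed.

Lemma commr_swap (T : unitRingType) (g h : T) : g \is a GRing.unit -> h \is a GRing.unit ->
  commr h g = (commr g h)^-1.
Proof.
move=> ug uh; apply: (mulrI (commr_unit ug uh)).
by rewrite commr_inv // divrr // commr_unit.
Qed.

Lemma conj_commute (T : unitRingType) (k c : T) : k \is a GRing.unit ->
  (c = k^-1 * c * k) <-> (k * c = c * k).
Proof.
move=> uk; split=> E.
  by rewrite {1}E !mulrA divrr // mul1r.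
by rewrite -mulrA -E mulKr.
Qed.

Lemma S2_prod (T : unitRingType) (k c : T) : k \is a GRing.unit -> c \is a GRing.unit ->
  k * c = c * k -> c * cjr k c^-1 = 1.
Proof.
move=> uk uc E.
have E' : c^-1 * k = k * c^-1.
  by apply: (mulrI uc); rewrite mulVKr // mulrA -E mulrK.
by rewrite /cjr -E' mulrK // divrr.
Qed.

Lemma inv_of (R : realType) (A B : 'M[CC R]_2) : A *m B = 1%:M -> invmx A = B.
Proof.
move=> H; have [uA _] := mulmx1_unit H.
by rewrite -[invmx A]mulmx1 -H mulmxA mulVmx // mul1mx.
Qed.

Lemma SU2_unit (R : realType) (A : 'M[CC R]_2) : SU2 A -> A \is a GRing.unit.
Proof. by case=> H _; have [] := mulmx1_unit H. Qed.

Lemma SU2_inv (R : realType) (A : 'M[CC R]_2) : SU2 A -> invmx A = adjmx A.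
Proof. by case=> H _; apply: inv_of. Qed.

Lemma SU21 (R : realType) : SU2 (1%:M : 'M[CC R]_2).
Proof.
have -> : (1%:M : 'M[CC R]_2) = mx2 1 0 (- 0^*) 1^*.
  by rewrite scalar_mx2 conj0 conj1 oppr0.
by apply: SU2_mk; rewrite conj0 conj1 mulr0 addr0 mulr1.
Qed.

Lemma SU2M (R : realType) (A B : 'M[CC R]_2) : SU2 A -> SU2 B -> SU2 (A *m B).
Proof.
case/SU2_form=> a [b [-> Ha]]; case/SU2_form=> c [d [-> Hc]].
rewrite mul_mx2.
have -> : mx2 (a * c + b * - d^*) (a * d + b * c^*) (- b^* * c + a^* * - d^*)
   (- b^* * d + a^* * c^*) =
  mx2 (a * c - b * d^*) (a * d + b * c^*) (- (a * d + b * c^*)^*)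
   (a * c - b * d^*)^*.
  by rewrite !conjD !conjN !conjM !conjCK; congr mx2; ring.
apply: SU2_mk.
have <- : (a * a^* + b * b^*) * (c * c^* + d * d^*) = 1 by rewrite Ha Hc mulr1.
by rewrite !conjD !conjN !conjM !conjCK; ring.
Qed.

Lemma SU2V (R : realType) (A : 'M[CC R]_2) : SU2 A -> SU2 (invmx A).
Proof.
move=> hA; rewrite SU2_inv //; case/SU2_form: hA => a [b [-> Ha]].
rewrite adj_mx2 conjN !conjCK.
have -> : mx2 a^* (- b) b^* a = mx2 a^* (- b) (- (- b)^*) a^*^*.
  by rewrite conjN opprK conjCK.
apply: SU2_mk; rewrite conjN conjCK -Ha; ring.
Qed.

Lemma lin_pos (F : comPzRingType) (x y l r : F) : l = r -> x - y = l - r -> x = y.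
Proof. by move=> E; rewrite E subrr => /subr0_eq. Qed.
Lemma lin_neg (F : comPzRingType) (x y l r : F) : l = r -> x - y = r - l -> x = y.
Proof. by move=> E; rewrite E subrr => /subr0_eq. Qed.
Lemma solve_lin (F : fieldType) (x c y : F) : c != 0 -> x * c = y -> x = y / c.
Proof. by move=> c0 <-; rewrite mulfK. Qed.

Lemma commutant2 (F : fieldType) (A B C : 'M[F]_2) :
  (C 0 1 != 0 \/ C 1 0 != 0 \/ C 0 0 != C 1 1) ->
  A *m C = C *m A -> B *m C = C *m B -> A *m B = B *m A.
Proof.
rewrite (mx2E A) (mx2E B) (mx2E C) !mx2_00 !mx2_01 !mx2_10 !mx2_11.
move: (A 0 0) (A 0 1) (A 1 0) (A 1 1) (B 0 0) (B 0 1) (B 1 0) (B 1 1)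
  (C 0 0) (C 0 1) (C 1 0) (C 1 1) => a1 a2 a3 a4 b1 b2 b3 b4 c1 c2 c3 c4.
rewrite !mul_mx2 => hC E1 E2.
case: (mx2_inj E1) => p1 p2 p3 _; case: (mx2_inj E2) => q1 q2 q3 _.
case: hC => [c2n|[c3n|dn]].
- have e1 : a1 = (c1*a2 + c2*a4 - a2*c4) / c2.
    by apply: solve_lin => //; apply: (lin_pos p2); ring.
  have e3 : a3 = (a2 * c3) / c2.
    by apply: solve_lin => //; apply: (lin_neg p1); ring.
  have f1 : b1 = (c1*b2 + c2*b4 - b2*c4) / c2.
    by apply: solve_lin => //; apply: (lin_pos q2); ring.
  have f3 : b3 = (b2 * c3) / c2.
    by apply: solve_lin => //; apply: (lin_neg q1); ring.
  subst a1 a3 b1 b3; congr mx2; field; assumption.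
- have e1 : a1 = (a3*c1 + a4*c3 - c4*a3) / c3.
    by apply: solve_lin => //; apply: (lin_neg p3); ring.
  have e2 : a2 = (c2 * a3) / c3.
    by apply: solve_lin => //; apply: (lin_pos p1); ring.
  have f1 : b1 = (b3*c1 + b4*c3 - c4*b3) / c3.
    by apply: solve_lin => //; apply: (lin_neg q3); ring.
  have f2 : b2 = (c2 * b3) / c3.
    by apply: solve_lin => //; apply: (lin_pos q1); ring.
  subst a1 a2 b1 b2; congr mx2; field; assumption.
- have dn' : c1 - c4 != 0 by rewrite subr_eq0.
  have e2 : a2 = ((a1 - a4) * c2) / (c1 - c4).
    by apply: solve_lin => //; apply: (lin_neg p2); ring.
  have e3 : a3 = ((a1 - a4) * c3) / (c1 - c4).
    by apply: solve_lin => //; apply: (lin_pos p3); ring.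
  have f2 : b2 = ((b1 - b4) * c2) / (c1 - c4).
    by apply: solve_lin => //; apply: (lin_neg q2); ring.
  have f3 : b3 = ((b1 - b4) * c3) / (c1 - c4).
    by apply: solve_lin => //; apply: (lin_pos q3); ring.
  subst a2 a3 b2 b3; congr mx2; field; assumption.
Qed.

Lemma two_neq0 (F : numFieldType) : (2 : F) != 0.
Proof. by rewrite pnatr_eq0. Qed.

Lemma sq1_det1 (F : numFieldType) (u : 'M[F]_2) :
  u *m u = 1%:M -> \det u = 1 -> u = 1%:M \/ u = - 1%:M.
Proof.
rewrite (mx2E u) det_mx2 mul_mx2 (scalar_mx2 (1 : F)).
move: (u 0 0) (u 0 1) (u 1 0) (u 1 1) => p q r s E Ed.
case: (mx2_inj E) => e1 e2 e3 e4.
have t : p * (p + s) = 2 by rewrite -[2]/(1 + 1) -{1}e1 -Ed; ring.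
have t2 : s * (p + s) = 2 by rewrite -[2]/(1 + 1) -{1}e4 -Ed; ring.
have ps : p + s != 0.
  by apply/negP => /eqP ps0; move: t; rewrite ps0 mulr0 => /esym/eqP; rewrite (negPf (two_neq0 F)).
have q0 : q = 0.
  have : q * (p + s) = 0 by rewrite -e2; ring.
  by move/eqP; rewrite mulf_eq0 (negPf ps) orbF => /eqP.
have r0 : r = 0.
  have : r * (p + s) = 0 by rewrite -e3; ring.
  by move/eqP; rewrite mulf_eq0 (negPf ps) orbF => /eqP.
have sp : s = p by apply: (mulIf ps); rewrite t t2.
subst q r s; rewrite mulr0 addr0 in e1.
have /orP [/eqP -> | /eqP ->] : (p == 1) || (p == -1) by rewrite -sqrf_eq1 expr2 e1.
- by left.
- by right; rewrite opp_mx2 oppr0.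
Qed.

Lemma SU2_nonscalar (R : realType) (C : 'M[CC R]_2) : SU2 C -> C != 1%:M -> C != - 1%:M ->
  (C 0 1 != 0 \/ C 1 0 != 0 \/ C 0 0 != C 1 1).
Proof.
case/SU2_form => a [b [-> Ha]] n1 nm1; rewrite !mx2_00 !mx2_01 !mx2_10 !mx2_11.
case: (eqVneq b 0) => [b0|bn]; last by left.
case: (eqVneq a a^*) => [aa|an]; last by right; right.
exfalso; subst b; rewrite conj0 mulr0 addr0 -aa in Ha.
have : (a == 1) || (a == -1) by rewrite -sqrf_eq1 expr2 Ha.
case/orP => /eqP ea.
- by move: n1; rewrite -aa ea conj0 oppr0 (scalar_mx2 (1 : CC R)) eqxx.
- by move: nm1; rewrite -aa ea conj0 oppr0 (scalar_mx2 (1 : CC R)) opp_mx2 oppr0 eqxx.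
Qed.

Lemma k_generic (F : numFieldType) (a ac b bc s al al' : F) : s != 0 ->
  al = (a - ac) / 2 -> al' = (ac - a) / 2 ->
  al * al' + b * bc = s ^+ 2 ->
  mx2 (al / s) (b / s) (- (bc / s)) (al' / s) *m mx2 (al / s) (b / s) (- (bc / s)) (al' / s)
    = - 1%:M /\
  mx2 (al / s) (b / s) (- (bc / s)) (al' / s) *m mx2 a b (- bc) ac =
  mx2 a b (- bc) ac *m mx2 (al / s) (b / s) (- (bc / s)) (al' / s).
Proof.
move=> sn hal hal' H.
have m1 : -1 = - (al * al' + b * bc) / s ^+ 2 by rewrite H mulNr divff // expf_neq0.
have t2 := two_neq0 F.
subst al al'; split.
- rewrite mul_mx2 (scalar_mx2 (1 : F)) opp_mx2 oppr0; congr mx2.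
  + by rewrite m1; field.
  + by field.
  + by field.
  + by rewrite m1; field.
- by rewrite !mul_mx2; congr mx2; field.
Qed.

Lemma conj2 (R : realType) : (2 : CC R)^* = 2.
Proof. exact: rmorph_nat. Qed.

Lemma k_exists (R : realType) (C : 'M[CC R]_2) : SU2 C -> C != 1%:M -> C != - 1%:M ->
  exists k, [/\ SU2 k, k *m k = - 1%:M & k *m C = C *m k].
Proof.
move=> hC n1 nm1; have ns := SU2_nonscalar hC n1 nm1.
move: (SU2_form hC) => [a [b [EC Ha]]].
rewrite EC !mx2_00 !mx2_01 !mx2_10 !mx2_11 in ns.
have [al hal] : exists al : CC R, al = (a - a^*) / 2 by eexists.
have [al' hal'] : exists al' : CC R, al' = (a^* - a) / 2 by eexists.
have alc : al^* = al' by rewrite hal hal' conjM conjV conj2 conjB conjCK.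
have n_ge0 : 0 <= al * al^* + b * b^* by rewrite addr_ge0 ?mul_conjC_ge0.
have n_neq0 : al * al^* + b * b^* != 0.
  apply/negP; rewrite paddr_eq0 ?mul_conjC_ge0 // !mul_conjC_eq0 => /andP [/eqP al0 /eqP b0].
  have aa : a = a^*.
    apply/subr0_eq; move: al0; rewrite hal => /eqP; rewrite mulf_eq0 invr_eq0.
    by rewrite (negPf (two_neq0 _)) orbF => /eqP.
  by move: ns; rewrite b0 conj0 oppr0 -aa !eqxx; case=> [|[]].
have [s hs] : exists s : CC R, s = sqrtC (al * al^* + b * b^*) by eexists.
have sn : s != 0 by rewrite hs sqrtC_eq0.
have sc : s^* = s by rewrite hs conj_Creal // sqrtC_real.
have H : al * al' + b * b^* = s ^+ 2 by rewrite hs sqrtCK alc.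
have [K1 K2] := k_generic sn hal hal' H.
exists (mx2 (al / s) (b / s) (- (b^* / s)) (al' / s)); split => //; last by rewrite EC.
have -> : mx2 (al / s) (b / s) (- (b^* / s)) (al' / s) =
          mx2 (al / s) (b / s) (- (b / s)^*) (al / s)^*.
  by rewrite !conjM !conjV sc alc.
apply: SU2_mk; rewrite !conjM !conjV sc alc.
have m1 : 1 = (al * al' + b * b^*) / s ^+ 2 by rewrite H divff // expf_neq0.
by rewrite [RHS]m1; field.
Qed.

Lemma neg_from_sq (T : ringType) (k k' : T) : k * k = -1 -> k' * k = 1 -> k' = - k.
Proof.
move=> E1 E2; have : k' * (k * k) = - k' by rewrite E1 mulrN1.
by rewrite mulrA E2 mul1r => ->; rewrite opprK.
Qed.

Lemma pos_from_sq (T : ringType) (k k' : T) : k * k = -1 -> k' * k = -1 -> k' = k.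
Proof.
move=> E1 E2; have : k' * (k * k) = - k' by rewrite E1 mulrN1.
by rewrite mulrA E2 mulN1r => /oppr_inj.
Qed.

Lemma cjrN (T : unitRingType) (k x : T) : cjr (- k) x = cjr k x.
Proof. by rewrite /cjr invrN mulrN mulNr mulNr opprK. Qed.

Lemma k_unique (R : realType) (C k k' : 'M[CC R]_2) : SU2 C -> C != 1%:M -> C != - 1%:M ->
  SU2 k -> SU2 k' -> k *m k = - 1%:M -> k' *m k' = - 1%:M ->
  k *m C = C *m k -> k' *m C = C *m k' -> k' = k \/ k' = - k.
Proof.
move=> hC n1 nm1 hk hk' Ek Ek' ck ck'.
have kk := commutant2 (SU2_nonscalar hC n1 nm1) ck ck'.
have u2 : (k' *m k) *m (k' *m k) = 1%:M.
  change ((k' * k) * (k' * k) = 1).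
  change (k * k = -1) in Ek; change (k' * k' = -1) in Ek'; change (k * k' = k' * k) in kk.
  by rewrite mulrA -(mulrA k' k k') kk mulrA Ek' -mulrA Ek mulrN1 opprK.
have d1 : \det (k' *m k) = 1 by rewrite det_mulmx hk.2 hk'.2 mulr1.
case: (sq1_det1 u2 d1) => E.
- by right; apply: (neg_from_sq (T := 'M[CC R]_2)).
- by left; apply: (pos_from_sq (T := 'M[CC R]_2)).
Qed.

Local Open Scope classical_set_scope.

Definition kprop (R : realType) (C : 'M[CC R]_2) : set 'M[CC R]_2 :=
  [set k | [/\ SU2 k, k *m k = - 1%:M & k *m C = C *m k]].

Definition psi (R : realType) (q : quad R) : quad R :=
  let: (g, h, _, _) := q in
  let k := xget 1%:M (kprop (comm g h)) in (g, h, cjr k h, cjr k g).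

Definition q0 (R : realType) : quad R := (1%:M, 1%:M, 1%:M, 1%:M).

Definition fO (R : realType) (O : set (quad R)) : set (quad R) :=
  orbitK (psi (xget (q0 R) O)).

Lemma conj_quadE (R : realType) (k g h x y : 'M[CC R]_2) :
  conj_quad k (g, h, x, y) = (cjr k g, cjr k h, cjr k x, cjr k y).
Proof. by []. Qed.

Lemma SU2_cj (R : realType) (m g : 'M[CC R]_2) : SU2 m -> SU2 g -> SU2 (cjr m g).
Proof. by move=> hm hg; apply: SU2M; [apply: SU2M | apply: SU2V]. Qed.

Lemma SU2_comm (R : realType) (g h : 'M[CC R]_2) : SU2 g -> SU2 h -> SU2 (comm g h).
Proof. by move=> hg hh; apply: SU2M; [apply: SU2M; [apply: SU2M|apply: SU2V] | apply: SU2V]. Qed.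

Lemma comm_cj (R : realType) (m g h : 'M[CC R]_2) : SU2 m -> SU2 g -> SU2 h ->
  comm (cjr m g) (cjr m h) = cjr m (comm g h).
Proof. by move=> hm hg hh; apply: commr_cj; apply: SU2_unit. Qed.

Lemma conj_quad_comp (R : realType) (k m : 'M[CC R]_2) (q : quad R) :
  SU2 k -> SU2 m -> conj_quad k (conj_quad m q) = conj_quad (k *m m) q.
Proof.
move=> hk hm; case: q => [[[g h] x] y]; rewrite !conj_quadE.
have uk := SU2_unit hk; have um := SU2_unit hm.
by rewrite !cjr_comp.
Qed.

Lemma conj_quadK (R : realType) (k : 'M[CC R]_2) (q : quad R) :
  SU2 k -> conj_quad (invmx k) (conj_quad k q) = q.
Proof.
move=> hk; case: q => [[[g h] x] y]; rewrite !conj_quadE.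
have uk := SU2_unit hk.
by rewrite !(cjrK _ uk).
Qed.

Lemma orbit_self (R : realType) (q : quad R) : orbitK q q.
Proof.
exists 1%:M; first exact: SU21.
case: q => [[[g h] x] y]; rewrite conj_quadE.
by rewrite !(cjr1x (T := 'M[CC R]_2)).
Qed.

Lemma orbit_eq (R : realType) (q q' : quad R) : orbitK q q' -> orbitK q' = orbitK q.
Proof.
case=> k hk ->; apply/seteqP; split => x [m hm ->].
- by exists (m *m k); [apply: SU2M | rewrite conj_quad_comp].
- exists (m *m invmx k); first by apply: SU2M => //; apply: SU2V.
  by rewrite -conj_quad_comp ?conj_quadK //; apply: SU2V.
Qed.


Local Open Scope classical_set_scope.

Lemma S1_Rep (R : realType) (q : quad R) : S1 q -> Rep q.
Proof.
case=> g [h [hg hh -> _ _]]; split => //.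
by apply: commr_inv; apply: SU2_unit.
Qed.

Lemma comm_ne (R : realType) (m c : 'M[CC R]_2) : SU2 m ->
  c != 1%:M -> c != - 1%:M -> cjr m c != 1%:M /\ cjr m c != - 1%:M.
Proof.
move=> hm n1 nm1; have um := SU2_unit hm; split.
- apply/negP => /eqP E; move/negP: n1; apply; apply/eqP.
  by apply: (cjr_inj um); rewrite E; apply/esym/cjr_1.
- apply/negP => /eqP E; move/negP: nm1; apply; apply/eqP.
  by apply: (cjr_inj um); rewrite E; apply/esym/cjr_N1.
Qed.

Lemma S1_conj (R : realType) (m : 'M[CC R]_2) (q : quad R) : SU2 m -> S1 q -> S1 (conj_quad m q).
Proof.
move=> hm [g [h [hg hh -> n1 nm1]]]; rewrite conj_quadE.
exists (cjr m g), (cjr m h); rewrite (comm_cj hm hg hh).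
have [a1 a2] := comm_ne hm n1 nm1.
split.
- exact: SU2_cj.
- exact: SU2_cj.
- by [].
- exact: a1.
- exact: a2.
Qed.

Lemma S2_Rep (R : realType) (q : quad R) : S2 q -> Rep q.
Proof.
case=> g [h [k [hg hh hk -> [E n1 nm1 Ek]]]].
have uk := SU2_unit hk; have ug := SU2_unit hg; have uh := SU2_unit hh.
split.
- exact: hg.
- exact: hh.
- exact: (SU2_cj hk hh).
- exact: (SU2_cj hk hg).
change (comm g h * comm (cjr k h) (cjr k g) = 1).
rewrite (comm_cj hk hh hg).
change (commr g h * cjr k (commr h g) = 1).
rewrite (commr_swap ug uh).
apply: S2_prod => //; first exact: commr_unit.
by apply/(conj_commute _ uk).
Qed.

Lemma psiE (R : realType) (g h : 'M[CC R]_2) :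
  psi (g, h, h, g) = (g, h, cjr (xget 1%:M (kprop (comm g h))) h,
                             cjr (xget 1%:M (kprop (comm g h))) g).
Proof. by []. Qed.

Lemma psi_S2 (R : realType) (q : quad R) : S1 q -> S2 (psi q).
Proof.
case=> g [h [hg hh -> n1 nm1]]; rewrite psiE.
have : kprop (comm g h) (xget 1%:M (kprop (comm g h))).
  by apply: xgetPex; apply: k_exists => //; apply: SU2_comm.
move: (xget _ _) => k [hk Ek ck].
exists g, h, k; split.
- exact: hg.
- exact: hh.
- exact: hk.
- by [].
split.
- by apply/(conj_commute _ (SU2_unit hk)).
- exact: n1.
- exact: nm1.
- exact: Ek.
Qed.


Lemma fO_fun (R : realType) : set_fun (imM (@S1 R)) (imM (@S2 R)) (@fO R).
Proof.
move=> O [q hq <-].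
have hr : orbitK q (xget (q0 R) (orbitK q)) := xgetI (q0 R) (orbit_self q).
case: hr => m hm Er.
exists (psi (xget (q0 R) (orbitK q))); last by [].
by apply: psi_S2; rewrite Er; apply: S1_conj.
Qed.

Lemma fO_inj (R : realType) : set_inj (imM (@S1 R)) (@fO R).
Proof.
move=> O1 O2; rewrite !in_setE => -[q1 h1 <-] -[q2 h2 <-].
rewrite /fO.
have hr1 := xgetI (q0 R) (orbit_self q1).
have hr2 := xgetI (q0 R) (orbit_self q2).
move: (xget (q0 R) (orbitK q1)) hr1 => r1 hr1.
move: (xget (q0 R) (orbitK q2)) hr2 => r2 hr2 E.
have S1r1 : S1 r1 by case: hr1 => m hm ->; apply: S1_conj.
have S1r2 : S1 r2 by case: hr2 => m hm ->; apply: S1_conj.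
rewrite -(orbit_eq hr1) -(orbit_eq hr2).
case: S1r1 => g1 [k1 [hg1 hk1 Er1 _ _]]; case: S1r2 => g2 [k2 [hg2 hk2 Er2 _ _]].
subst r1 r2.
have : orbitK (psi (g1, k1, k1, g1)) (psi (g2, k2, k2, g2)) by rewrite E; apply: orbit_self.
rewrite !psiE => -[m hm]; rewrite conj_quadE => EE.
have eg : g2 = cjr m g1 := congr1 (fun q : quad R => q.1.1.1) EE.
have eh : k2 = cjr m k1 := congr1 (fun q : quad R => q.1.1.2) EE.
apply/esym/orbit_eq; exists m; first exact: hm.
by rewrite conj_quadE -eg -eh.
Qed.


Lemma fO_surj (R : realType) : set_surj (imM (@S1 R)) (imM (@S2 R)) (@fO R).
Proof.
move=> O' [q2 h2 <-].
case: (h2) => g [h [k [hg hh hk Eq [Ec n1 nm1 Ek]]]].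
have hS1 : S1 (g, h, h, g).
  exists g, h; split; [exact: hg | exact: hh | by [] | exact: n1 | exact: nm1].
exists (orbitK (g, h, h, g)); first by exists (g, h, h, g).
rewrite /fO.
have hr := xgetI (q0 R) (orbit_self (g, h, h, g)).
move: (xget _ _) hr => r [m hm ->].
rewrite conj_quadE psiE.
have uk := SU2_unit hk; have um := SU2_unit hm.
have ug := SU2_unit hg; have uh := SU2_unit hh.
have ck : k * commr g h = commr g h * k by apply/(conj_commute _ uk).
have kp : kprop (comm (cjr m g) (cjr m h)) (cjr m k).
  split.
  - exact: SU2_cj hm hk.
  - change (cjr m k * cjr m k = -1); rewrite -cjrM //.
    change (k * k = -1) in Ek; rewrite Ek; exact: cjr_N1.
  - rewrite (comm_cj hm hg hh).
    change (cjr m k * cjr m (commr g h) = cjr m (commr g h) * cjr m k).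
    by rewrite -!cjrM // ck.
have k0p := xgetI 1%:M kp.
move: (xget _ _) k0p => k0 [hk0 Ek0 ck0].
have [c1 c2] := comm_ne hm n1 nm1.
have hC' : SU2 (comm (cjr m g) (cjr m h)) by apply: SU2_comm; apply: SU2_cj.
have [n1' nm1'] : comm (cjr m g) (cjr m h) != 1%:M /\ comm (cjr m g) (cjr m h) != - 1%:M.
  by rewrite (comm_cj hm hg hh).
case: kp => hk' Ek' ck'.
have Hk : forall X, cjr k0 X = cjr (cjr m k) X.
  move=> X; case: (k_unique hC' n1' nm1' hk' hk0 Ek' Ek0 ck' ck0) => ->.
  - by [].
  - exact: cjrN.
rewrite !Hk.
have e : forall X, cjr (cjr m k) (cjr m X) = cjr m (cjr k X).
  move=> X; rewrite !cjr_comp //; last exact: cjr_unit.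
  by rewrite /cjr (divrK um).
apply: orbit_eq; exists m; first exact: hm.
by rewrite Eq conj_quadE !e.
Qed.

Theorem mainTheorem11 (R : realType) :
  imM (@S1 R) `<=` @Mquot R /\ imM (@S2 R) `<=` @Mquot R /\
  exists f : set (quad R) -> set (quad R),
    set_bij (imM (@S1 R)) (imM (@S2 R)) f.
Proof.
split; first by move=> O [q hq <-]; exists q => //; apply: S1_Rep.
split; first by move=> O [q hq <-]; exists q => //; apply: S2_Rep.
exists (@fO R); split.
- exact: fO_fun.
- exact: fO_inj.
- exact: fO_surj.
Qed.
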